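(* Fix $\alpha\in\mathbb R$, $r\in\mathbb N_0$, and assume (WR$_{\alpha,r}$). Then there is $C_{\alpha,r}>0$ such that for every $f\in\mathcal C^{r+4}_{\alpha,\infty}(\mathbb R^k)$, $$\|Lf\|_{\alpha,r+2}+\|L^2f\|_{\alpha,r}\le C_{\alpha,r}\|f\|_{\alpha,r+4}.$$ In particular $L:\mathcal C^{r+2}_{\alpha,\infty}(\mathbb R^k)\to\mathcal C^r_{\alpha,\infty}(\mathbb R^k)$ is a bounded operator.
   Context: $\mathbb R^k$ Euclidean; $D^jf(x)$ the $j$-th derivative as a symmetric $j$-linear map, $\|\cdot\|$ operator norm. $b=\sigma_0,\dots,\sigma_d:\mathbb R^k\to\mathbb R^k$; $Lf(x)=Df(x)[b(x)]+\frac12\sum_{l=1}^dD^2f(x)[\sigma_l(x),\sigma_l(x)]$. $w_\gamma(x)=(1+|x|^2)^{\gamma/2}$; $\|f\|_{\alpha,k}=\max_{0\le j\le k}\sup_x\|D^jf(x)\|/w_{\alpha-j}(x)$; $\mathcal C^k_{\alpha,\infty}(\mathbb R^k)$ is the space of $f\in C^k$ with $\|f\|_{\alpha,k}<\infty$ and each $\|D^jf\|/w_{\alpha-j}$ ($0\le j\le k$) vanishing at infinity. (WR$_{\alpha,r}$): each $\sigma_j\in C^{r+4}$ with $\|D^q\sigma_j(x)\|\le K_{\alpha,r}w_{1-q}(x)$ for all $x$, $q=0,\dots,r+4$, $j=0..d$, and $D^{r+4}\sigma_j$ globally Hölder of some exponent $\theta\in(0,1)$. *)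

(* Defs.v *)
From HB Require Import structures.
From mathcomp Require Import all_boot all_order all_algebra.
From mathcomp Require Import all_classical all_reals all_analysis.
Set Implicit Arguments. Unset Strict Implicit. Unset Printing Implicit Defensive.
Import Order.TTheory GRing.Theory Num.Theory.
Import numFieldNormedType.Exports.
Local Open Scope classical_set_scope.
Local Open Scope ring_scope.

Section Defs.
Variable R : realType.
Variable k : nat.
Local Notation V := 'rV[R]_k.

Definition enorm (v : V) : R := Num.sqrt (\sum_(i < k) v ord0 i ^+ 2).

Definition wgt (gamma : R) (x : V) : R := powR (1 + enorm x ^+ 2) (gamma / 2).

(* iterated directional derivative: D^j f(x)[h_1,...,h_j], hs = [h_1;...;h_j] *)
Fixpoint iderive (W : normedModType R) (f : V -> W) (hs : seq V) : V -> W :=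
  match hs with
  | [::] => f
  | h :: hs' => fun x => derive (iderive f hs') x h
  end.

Fixpoint Ck (W : normedModType R) (n : nat) (f : V -> W) : Prop :=
  match n with
  | 0 => continuous f
  | n'.+1 => (forall x, differentiable f x) /\ forall v : V, Ck n' (fun x => derive f x v)
  end.

Definition mlnorm (W : Type) (nW : W -> R) (j : nat) (A : seq V -> W) : \bar R :=
  ereal_sup [set (nW (A hs))%:E | hs in
             [set hs : seq V | size hs = j /\ all (fun h => enorm h <= 1) hs]].

Definition Dnorm (W : normedModType R) (nW : W -> R) (j : nat) (f : V -> W) (x : V)
  : \bar R := mlnorm nW j (fun hs => iderive f hs x).

Definition wnorm (alpha : R) (n : nat) (f : V -> R) : \bar R :=
  ereal_sup [set e : \bar R | exists (j : nat) (x : V), (j <= n)%N /\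
     e = (Dnorm Num.norm j f x * ((wgt (alpha - j%:R) x)^-1)%:E)%E].

Definition Cspace (alpha : R) (n : nat) (f : V -> R) : Prop :=
  Ck n f /\ (wnorm alpha n f < +oo)%E /\
  forall j : nat, (j <= n)%N ->
    forall eps : R, 0 < eps -> exists M : R, forall x : V, M <= enorm x ->
      (Dnorm Num.norm j f x <= (eps * wgt (alpha - j%:R) x)%:E)%E.

Definition Lgen (d : nat) (b : V -> V) (sig : 'I_d -> V -> V) (f : V -> R) : V -> R :=
  fun x => derive f x (b x)
           + 2^-1 * \sum_(l < d) iderive f [:: sig l x; sig l x] x.

Definition WRcoef (r : nat) (K : R) (s : V -> V) : Prop :=
  Ck (r + 4) s /\
  (forall (q : nat) (x : V), (q <= r + 4)%N ->
      (Dnorm enorm q s x <= (K * wgt (1 - q%:R) x)%:E)%E) /\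
  exists theta : R, 0 < theta < 1 /\ exists H : R, forall x y : V,
    (mlnorm enorm (r + 4) (fun hs => (iderive s hs x - iderive s hs y)%R)
       <= (H * powR (enorm (x - y)) theta)%:E)%E.

End Defs.

(* Main.v *)
Require Import Defs.
From HB Require Import structures.
From mathcomp Require Import all_boot all_order all_algebra.
From mathcomp Require Import all_classical all_reals all_analysis.
From mathcomp Require Import lra ring.
Set Implicit Arguments. Unset Strict Implicit. Unset Printing Implicit Defensive.
Import Order.TTheory GRing.Theory Num.Theory.
Import numFieldNormedType.Exports.
Local Open Scope ring_scope.

Section L.
Variable R : realType.
Variable k : nat.
Local Notation V := 'rV[R]_k.

Lemma iderive_rcons (W : normedModType R) (f : V -> W) hs v :
  iderive f (rcons hs v) = iderive (fun x => derive f x v) hs.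
Proof. by elim: hs => [//|h hs IH] /=; rewrite IH. Qed.

Lemma Ck_le (W : normedModType R) n (f : V -> W) : Ck n.+1 f -> Ck n f.
Proof.
elim: n f => [|n IH] f /= [df Hd].
- by move=> x; apply: differentiable_continuous.
- by split=> // v; exact: IH (Hd v).
Qed.

Lemma Ck_mono (W : normedModType R) m n (f : V -> W) :
  (m <= n)%N -> Ck n f -> Ck m f.
Proof.
move=> /subnK <-; elim: (n - m)%N => // i IH H; apply: IH.
by apply: Ck_le; rewrite -addSn.
Qed.

Lemma Ck_diff (W : normedModType R) n (f : V -> W) x : Ck n.+1 f -> differentiable f x.
Proof. by case=> H _; exact: H. Qed.

Lemma Ck_der (W : normedModType R) n (f : V -> W) v :
  Ck n.+1 f -> Ck n (fun x => derive f x v).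
Proof. by case=> _ H; exact: H. Qed.

Lemma Ck_add n (f g : V -> R) : Ck n f -> Ck n g -> Ck n (fun x => f x + g x).
Proof.
elim: n f g => [|n IH] f g.
- by move=> /= cf cg x; exact: (continuousD (cf x) (cg x)).
- move=> cf cg; split.
    by move=> x; exact: (differentiableD (Ck_diff x cf) (Ck_diff x cg)).
  move=> v.
  have -> : (fun x => derive (fun x0 => f x0 + g x0) x v) =
     (fun x => derive f x v + derive g x v).
    apply: funext=> x; rewrite -(deriveD (f:=f) (g:=g)) //;
      apply: diff_derivable; apply: Ck_diff; eassumption.
  by apply: IH; apply: Ck_der.
Qed.

Lemma Ck_mul n (f g : V -> R) : Ck n f -> Ck n g -> Ck n (fun x => f x * g x).
Proof.
elim: n f g => [|n IH] f g.
- by move=> /= cf cg x; exact: (continuousM (cf x) (cg x)).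
- move=> cf cg; split.
    by move=> x; exact: (differentiableM (Ck_diff x cf) (Ck_diff x cg)).
  move=> v.
  have -> : (fun x => derive (fun x0 => f x0 * g x0) x v) =
     (fun x => f x * derive g x v + g x * derive f x v).
    apply: funext=> x; rewrite [LHS](_ : _ = 'D_v (f * g) x) //.
    rewrite deriveM //.
    1,2: by apply: diff_derivable; apply: Ck_diff; eassumption.
  apply: Ck_add; apply: IH; try apply: Ck_der => //; exact: Ck_le.
Qed.

Lemma Ck_cst n (c : R) : Ck n (fun _ : V => c).
Proof.
elim: n c => [|n IH] c; first by move=> x; apply: cst_continuous.
split; first by move=> x; apply: differentiable_cst.
move=> v; have -> : (fun x => derive (fun _ : V => c) x v) = (fun _ => 0).
  by apply: funext => x; exact: (derive_cst c).
exact: IH.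
Qed.


Lemma wgt_gt0 (a : R) (x : V) : 0 < wgt a x.
Proof. by apply: powR_gt0; rewrite ltr_wpDr ?sqr_ge0. Qed.

Lemma wgtD (a b : R) (x : V) : wgt a x * wgt b x = wgt (a + b) x.
Proof.
rewrite /wgt mulrDl powRD //; apply/implyP => _.
by rewrite gt_eqF // ltr_wpDr ?sqr_ge0.
Qed.

Lemma wgt0 (x : V) : wgt 0 x = 1.
Proof. by rewrite /wgt mul0r powRr0. Qed.

Definition Bnd (S : set V) (beta M : R) (n : nat) (g : V -> R) :=
  forall hs x, (size hs <= n)%N -> all (fun h => enorm h <= 1) hs -> S x ->
   `|iderive g hs x| <= M * wgt (beta - (size hs)%:R) x.

Definition P S beta M n g := Ck n g /\ Bnd S beta M n g.

Lemma Bnd_char0 S beta M g :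
  (forall x, S x -> `|g x| <= M * wgt beta x) -> Bnd S beta M 0 g.
Proof.
move=> H hs x; rewrite leqn0 => /eqP/size0nil -> _ Sx /=.
by rewrite subr0; exact: H.
Qed.

Lemma Bnd_char S beta M n g :
  (forall x, S x -> `|g x| <= M * wgt beta x) ->
  (forall v, enorm v <= 1 -> Bnd S (beta - 1) M n (fun x => derive g x v)) ->
  Bnd S beta M n.+1 g.
Proof.
move=> H0 H1 hs x; case/lastP: hs => [|hs v].
  by move=> _ _ Sx /=; rewrite subr0; exact: H0.
rewrite size_rcons ltnS all_rcons => hn /andP[vu hu] Sx.
rewrite iderive_rcons.
have -> : beta - (size hs).+1%:R = beta - 1 - (size hs)%:R.
  by rewrite -addn1 natrD; lra.
exact: H1.
Qed.

Lemma Bnd_der S beta M n g v :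
  Bnd S beta M n.+1 g -> enorm v <= 1 -> Bnd S (beta - 1) M n (fun x => derive g x v).
Proof.
move=> H vu hs x hn hu Sx; rewrite -iderive_rcons.
have := H (rcons hs v) x; rewrite size_rcons all_rcons vu hu ltnS => /(_ hn isT Sx).
have -> : beta - (size hs).+1%:R = beta - 1 - (size hs)%:R.
  by rewrite -addn1 natrD; lra.
by [].
Qed.

Lemma Bnd_0 S beta M n g x : Bnd S beta M n g -> S x -> `|g x| <= M * wgt beta x.
Proof. by move=> H Sx; have := H [::] x (leq0n _) isT Sx; rewrite /= subr0. Qed.

Lemma Bnd_le S beta M m n g : (m <= n)%N -> Bnd S beta M n g -> Bnd S beta M m g.
Proof. by move=> mn H hs x hm; apply: H; exact: leq_trans hm mn. Qed.

Lemma Bnd_M S beta M M' n g : M <= M' -> Bnd S beta M n g -> Bnd S beta M' n g.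
Proof.
move=> MM H hs x hn hu Sx; apply: le_trans (H hs x hn hu Sx) _.
by rewrite ler_wpM2r // ltW // wgt_gt0.
Qed.

Lemma Bnd_eqb S beta beta' M n g : beta = beta' -> Bnd S beta M n g -> Bnd S beta' M n g.
Proof. by move=> ->. Qed.

Lemma Bnd_zero S beta M n : 0 <= M -> Bnd S beta M n (fun _ => 0).
Proof.
move=> M0; elim: n beta => [|n IH] beta.
  by apply: Bnd_char0 => x _; rewrite normr0 mulr_ge0 // ltW // wgt_gt0.
apply: Bnd_char; first by move=> x _; rewrite normr0 mulr_ge0 // ltW // wgt_gt0.
move=> v _; have -> : (fun x => derive (fun _ : V => 0 : R) x v) = (fun _ => 0).
  by apply: funext => x; exact: (derive_cst 0).
exact: IH.
Qed.

Lemma Bnd_cst S n (c : R) : Bnd S 0 `|c| n (fun _ => c).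
Proof.
case: n => [|n].
  by apply: Bnd_char0 => x _; rewrite wgt0 mulr1.
apply: Bnd_char; first by move=> x _; rewrite wgt0 mulr1.
move=> v _; have -> : (fun x => derive (fun _ : V => c) x v) = (fun _ => 0).
  by apply: funext => x; exact: (derive_cst c).
exact: Bnd_zero.
Qed.

Lemma Bnd_add S beta A B n f g : Ck n f -> Ck n g ->
  Bnd S beta A n f -> Bnd S beta B n g -> Bnd S beta (A + B) n (fun x => f x + g x).
Proof.
elim: n beta f g => [|n IH] beta f g cf cg Hf Hg.
  apply: Bnd_char0 => x Sx; rewrite mulrDl (le_trans (ler_normD _ _)) //.
  by rewrite lerD // ?(Bnd_0 Hf Sx) ?(Bnd_0 Hg Sx).
apply: Bnd_char.
  move=> x Sx; rewrite mulrDl (le_trans (ler_normD _ _)) //.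
  by rewrite lerD // ?(Bnd_0 Hf Sx) ?(Bnd_0 Hg Sx).
move=> v vu.
have -> : (fun x => derive (fun x0 => f x0 + g x0) x v) =
   (fun x => derive f x v + derive g x v).
  apply: funext=> x; rewrite -(deriveD (f:=f) (g:=g)) //;
    apply: diff_derivable; apply: Ck_diff; eassumption.
by apply: IH; try apply: Ck_der => //; apply: Bnd_der.
Qed.

Lemma Bnd_mul S b1 b2 M1 M2 n u g : Ck n u -> Ck n g ->
  Bnd S b1 M1 n u -> Bnd S b2 M2 n g ->
  Bnd S (b1 + b2) (2 ^+ n * (M1 * M2)) n (fun x => u x * g x).
Proof.
have base : forall b1 b2 M1 M2 (u g : V -> R) x, `|u x| <= M1 * wgt b1 x ->
   `|g x| <= M2 * wgt b2 x -> `|u x * g x| <= M1 * M2 * wgt (b1 + b2) x.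
  move=> c1 c2 N1 N2 u0 g0 x H1 H2; rewrite normrM -wgtD.
  rewrite (le_trans (ler_pM _ _ H1 H2)) ?normr_ge0 //.
  by rewrite le_eqVlt; apply/orP; left; apply/eqP; ring.
elim: n b1 b2 M1 M2 u g => [|n IH] b1 b2 M1 M2 u g cu cg Hu Hg.
  by apply: Bnd_char0 => x Sx; rewrite expr0 mul1r; apply: base;
    [exact: (Bnd_0 Hu Sx) | exact: (Bnd_0 Hg Sx)].
apply: Bnd_char.
  move=> x Sx; have := base _ _ _ _ _ _ x (Bnd_0 Hu Sx) (Bnd_0 Hg Sx).
  move=> H; apply: (le_trans H); rewrite -[X in _ <= X]mulrA; apply: ler_peMl.
    by rewrite (le_trans _ H).
  by rewrite exprn_ege1 // ler1n.
move=> v vu.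
have -> : (fun x => derive (fun x0 => u x0 * g x0) x v) =
   (fun x => u x * derive g x v + g x * derive u x v).
  apply: funext=> x; rewrite [LHS](_ : _ = 'D_v (u * g) x) //.
  rewrite deriveM //.
  1,2: by apply: diff_derivable; apply: Ck_diff; eassumption.
have -> : 2 ^+ n.+1 * (M1 * M2) = 2 ^+ n * (M1 * M2) + 2 ^+ n * (M2 * M1).
  by rewrite exprS; ring.
apply: Bnd_add.
- apply: Ck_mul; [exact: Ck_le | exact: Ck_der].
- apply: Ck_mul; [exact: Ck_le | exact: Ck_der].
- apply: Bnd_eqb (IH _ _ _ _ _ _ (Ck_le cu) (Ck_der v cg) (Bnd_le (leqnSn n) Hu)
     (Bnd_der Hg vu)); lra.
- apply: Bnd_eqb (IH _ _ _ _ _ _ (Ck_le cg) (Ck_der v cu) (Bnd_le (leqnSn n) Hg)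
     (Bnd_der Hu vu)); lra.
Qed.


Lemma P_add S beta A B n f g : P S beta A n f -> P S beta B n g ->
  P S beta (A + B) n (fun x => f x + g x).
Proof. by move=> [cf bf] [cg bg]; split; [exact: Ck_add | exact: Bnd_add]. Qed.

Lemma P_mul S b1 b2 M1 M2 n u g : P S b1 M1 n u -> P S b2 M2 n g ->
  P S (b1 + b2) (2 ^+ n * (M1 * M2)) n (fun x => u x * g x).
Proof. by move=> [cf bf] [cg bg]; split; [exact: Ck_mul | exact: Bnd_mul]. Qed.

Lemma P_eqb S beta beta' M n g : beta = beta' -> P S beta M n g -> P S beta' M n g.
Proof. by move=> ->. Qed.

Lemma P_sum m S beta M n (F : 'I_m -> V -> R) :
  (forall i, P S beta M n (F i)) ->
  P S beta (m%:R * M) n (fun x => \sum_(i < m) F i x).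
Proof.
elim: m F => [|m IH] F HP.
  have -> : (fun x => \sum_(i < 0) F i x) = (fun _ => 0).
    by apply: funext => x; rewrite big_ord0.
  rewrite mul0r; split; [exact: Ck_cst | exact: Bnd_zero].
have -> : (fun x => \sum_(i < m.+1) F i x) =
   (fun x => \sum_(i < m) F (widen_ord (leqnSn m) i) x + F ord_max x).
  by apply: funext => x; rewrite big_ord_recr.
rewrite -[X in X%:R]addn1 natrD mulrDl mul1r; apply: P_add => //.
exact: IH.
Qed.

Lemma Ck_coord n (s : V -> V) j : Ck n s -> Ck n (fun x => s x 0 j).
Proof.
elim: n s => [|n IH] s.
  by move=> cs x; exact: (continuous_comp (cs x) (@coord_continuous R _ _ 0 j (s x))).
move=> cs; split.
  move=> x; exact: (differentiable_comp (Ck_diff x cs) (differentiable_coord _ 0 j)).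
move=> v.
have -> : (fun x => derive (fun y => s y 0 j) x v) = (fun x => derive s x v 0 j).
  apply: funext => x; rewrite derive_mx ?mxE //.
  by apply: diff_derivable; exact: Ck_diff cs.
by apply: IH; exact: Ck_der.
Qed.

Lemma coord_le (v : V) j : `|v 0 j| <= enorm v.
Proof.
rewrite /enorm -sqrtr_sqr ler_sqrt; last by rewrite sumr_ge0 // => i _; rewrite sqr_ge0.
rewrite (bigD1 j) //= ler_wpDr //; last by rewrite sumr_ge0 // => i _; rewrite sqr_ge0.
Qed.

Lemma enorm_e j : enorm ('e_j : V) <= 1.
Proof.
rewrite /enorm (bigD1 j) //= big1 => [|i /negbTE ij]; last by rewrite !mxE ij andbF expr0n.
by rewrite !mxE !eqxx /= expr1n addr0 sqrtr1.
Qed.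

Lemma Bnd_coord n S beta M (s : V -> V) j : Ck n s ->
  (forall hs x, (size hs <= n)%N -> all (fun h => enorm h <= 1) hs -> S x ->
     enorm (iderive s hs x) <= M * wgt (beta - (size hs)%:R) x) ->
  Bnd S beta M n (fun x => s x 0 j).
Proof.
elim: n beta s => [|n IH] beta s cs H.
  apply: Bnd_char0 => x Sx; apply: le_trans (coord_le _ _) _.
  by have := H [::] x (leq0n _) isT Sx; rewrite /= subr0.
apply: Bnd_char.
  move=> x Sx; apply: le_trans (coord_le _ _) _.
  by have := H [::] x (leq0n _) isT Sx; rewrite /= subr0.
move=> v vu.
have -> : (fun x => derive (fun y => s y 0 j) x v) = (fun x => derive s x v 0 j).
  apply: funext => x; rewrite derive_mx ?mxE //.
  by apply: diff_derivable; exact: Ck_diff cs.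
apply: IH; first exact: Ck_der.
move=> hs x hn hu Sx; rewrite -iderive_rcons.
have := H (rcons hs v) x; rewrite size_rcons all_rcons vu hu ltnS => /(_ hn isT Sx).
have -> : beta - (size hs).+1%:R = beta - 1 - (size hs)%:R.
  by rewrite -addn1 natrD; lra.
by [].
Qed.

Lemma derive_lin (f : V -> R) x v : differentiable f x ->
  derive f x v = \sum_(j < k) v 0 j * derive f x ('e_j : V).
Proof.
move=> df; rewrite deriveE // {1}(row_sum_delta v) linear_sum.
by apply: eq_bigr => j _; rewrite linearZ /= deriveE.
Qed.

Lemma derive_sumc m (c : 'I_m -> R) (F : 'I_m -> V -> R) x v :
  (forall j, derivable (F j) x v) ->
  derive (fun y => \sum_(j < m) c j * F j y) x v = \sum_(j < m) c j * derive (F j) x v.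
Proof.
move=> dF.
have -> : (fun y => \sum_(j < m) c j * F j y) = \sum_(j < m) (c j \*o F j).
  by apply: funext => y; rewrite fct_sumE.
rewrite derive_sum; last by move=> j; exact: (derivableM (derivable_cst (c j) x v) (dF j)).
by apply: eq_bigr => j _; rewrite deriveMl.
Qed.

Definition D1 (f : V -> R) j := fun y => derive f y ('e_j : V).
Definition D2 (f : V -> R) i j := fun y => derive (D1 f j) y ('e_i : V).

Lemma Lgen_dec d b (sig : 'I_d -> V -> V) f : Ck 2 f ->
  Lgen b sig f = fun x => \sum_(j < k) b x 0 j * D1 f j x + 2^-1 *
     \sum_(l < d) \sum_(j < k) (sig l x 0 j * \sum_(i < k) (sig l x 0 i * D2 f i j x)).
Proof.
move=> cf; apply: funext => x; rewrite /Lgen.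
congr (_ + 2^-1 * _); first exact: derive_lin (Ck_diff x cf).
apply: eq_bigr => l _ /=.
have -> : (fun y => derive f y (sig l x)) =
    (fun y => \sum_(j<k) sig l x 0 j * D1 f j y).
  apply: funext => y; exact: derive_lin (Ck_diff y cf).
rewrite derive_sumc; last first.
  by move=> j; apply: diff_derivable; exact: (Ck_diff x (Ck_der _ cf)).
apply: eq_bigr => j _; congr (_ * _).
exact: derive_lin (Ck_diff x (Ck_der _ cf)).
Qed.


Definition Lc (d n : nat) (Kp : R) : R :=
  k%:R * (2 ^+ n * Kp) + 2 ^+ n * (`|2^-1 : R| * (d%:R * (k%:R *
     (2 ^+ n * (Kp * (k%:R * (2 ^+ n * Kp))))))).

Lemma Lc_ge0 d n Kp : 0 <= Kp -> 0 <= Lc d n Kp.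
Proof.
move=> K0; rewrite /Lc addr_ge0 // !mulr_ge0 // exprn_ge0 //.
Qed.

Lemma Lbound d (b : V -> V) (sig : 'I_d -> V -> V) Kp n S beta M f :
  (forall j, P S 1 Kp n (fun x => b x 0 j)) ->
  (forall l j, P S 1 Kp n (fun x => sig l x 0 j)) ->
  Ck n.+2 f -> Bnd S beta M n.+2 f ->
  P S beta (Lc d n Kp * M) n (Lgen b sig f).
Proof.
move=> Hb Hs cf bf.
rewrite (Lgen_dec _ _ (Ck_mono (isT : (2 <= n.+2)%N) cf)).
have PD1 : forall j, P S (beta - 1) M n (D1 f j).
  move=> j; split; first exact: Ck_le (Ck_der _ cf).
  exact: Bnd_le (leqnSn _) (Bnd_der bf (enorm_e j)).
have PD2 : forall i j, P S (beta - 1 - 1) M n (D2 f i j).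
  move=> i j; split; first exact: Ck_der (Ck_der _ cf).
  exact: Bnd_der (Bnd_der bf (enorm_e j)) (enorm_e i).
have T1 := P_sum (fun j => P_mul (Hb j) (PD1 j)).
have I1 := fun l j => P_sum (fun i => P_mul (Hs l i) (PD2 i j)).
have J1 := fun l => P_sum (fun j => P_mul (Hs l j) (I1 l j)).
have J2 := P_sum J1.
have J3 := P_mul (conj (Ck_cst n (2^-1 : R)) (@Bnd_cst S n (2^-1 : R))) J2.
have := P_add (P_eqb _ T1) (P_eqb _ J3).
move=> /(_ beta) H; have {}H := H (ltac:(lra)) (ltac:(lra)).
suff -> : Lc d n Kp * M = k%:R * (2 ^+ n * (Kp * M)) + 2 ^+ n * (`|2^-1 : R| *
   (d%:R * (k%:R * (2 ^+ n * (Kp * (k%:R * (2 ^+ n * (Kp * M)))))))) by exact: H.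
by rewrite /Lc; ring.
Qed.


Lemma iderive_Dnorm (W : normedModType R) (nW : W -> R) (f : V -> W) hs x :
  all (fun h => enorm h <= 1) hs ->
  ((nW (iderive f hs x))%:E <= Dnorm nW (size hs) f x)%E.
Proof. by move=> hu; apply: ereal_sup_ubound; exists hs. Qed.

Lemma Bnd_Dnorm S beta M n g j x : Bnd S beta M n g -> (j <= n)%N -> S x ->
  (Dnorm Num.norm j g x <= (M * wgt (beta - j%:R) x)%:E)%E.
Proof.
move=> H jn Sx; apply/ereal_supP => y [hs [hsz hu] <-].
by rewrite lee_fin; subst j; exact: H.
Qed.

Lemma wnorm_le beta M n g : Bnd setT beta M n g -> (wnorm beta n g <= M%:E)%E.
Proof.
move=> H; apply/ereal_supP => y [j [x [jn ->]]].
have w0 := wgt_gt0 (beta - j%:R) x.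
have h1 := Bnd_Dnorm H jn (I : setT x).
have h2 : (0 <= ((wgt (beta - j%:R) x)^-1)%:E)%E by rewrite lee_fin invr_ge0 ltW.
move: (lee_wpmul2r h2 h1) => /le_trans; apply.
by rewrite -EFinM lee_fin mulfK // gt_eqF.
Qed.

Lemma iderive_wnorm beta n (f : V -> R) hs x : (size hs <= n)%N ->
  all (fun h => enorm h <= 1) hs ->
  ((`|iderive f hs x| * (wgt (beta - (size hs)%:R) x)^-1)%:E <= wnorm beta n f)%E.
Proof.
move=> hn hu.
have h : (Dnorm Num.norm (size hs) f x * ((wgt (beta - (size hs)%:R) x)^-1)%:E
   <= wnorm beta n f)%E.
  by apply: ereal_sup_ubound; exists (size hs), x; split.
have h2 : (0 <= ((wgt (beta - (size hs)%:R) x)^-1)%:E)%E.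
  by rewrite lee_fin invr_ge0 ltW // wgt_gt0.
rewrite EFinM; move: (lee_wpmul2r h2 (iderive_Dnorm Num.norm f x hu)) => /le_trans.
by apply.
Qed.

Lemma wnorm_Bnd beta n (f : V -> R) : (wnorm beta n f < +oo)%E ->
  0 <= fine (wnorm beta n f) /\ (fine (wnorm beta n f))%:E = wnorm beta n f /\
  Bnd setT beta (fine (wnorm beta n f)) n f.
Proof.
move=> fin.
have W0 : (0 <= wnorm beta n f)%E.
  move: (@iderive_wnorm beta n f [::] 0 (leq0n n) isT); apply: le_trans.
  by rewrite lee_fin mulr_ge0 // invr_ge0 ltW // wgt_gt0.
have fW : wnorm beta n f \is a fin_num by rewrite ge0_fin_numE.
split; first by rewrite -lee_fin fineK.
split; first by rewrite fineK.
move=> hs x hn hu _; have := @iderive_wnorm beta n f hs x hn hu.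
rewrite -(fineK fW) lee_fin -ler_pdivrMr ?wgt_gt0 //.
Qed.

Lemma decay_Bnd n beta (f : V -> R) eps :
  (forall j, (j <= n)%N -> forall eps, 0 < eps -> exists M : R, forall x : V,
     M <= enorm x -> (Dnorm Num.norm j f x <= (eps * wgt (beta - j%:R) x)%:E)%E) ->
  0 < eps -> exists M0, Bnd [set x | M0 <= enorm x] beta eps n f.
Proof.
move=> H he.
have U : forall m, (m <= n)%N -> exists M0 : R, forall j, (j <= m)%N -> forall x : V,
    M0 <= enorm x -> (Dnorm Num.norm j f x <= (eps * wgt (beta - j%:R) x)%:E)%E.
  elim => [|m IH] mn.
    have [M HM] := H 0%N (leq0n _) eps he.
    by exists M => j; rewrite leqn0 => /eqP ->.
  have [M1 H1] := IH (ltnW mn).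
  have [M2 H2] := H m.+1 mn eps he.
  exists (Num.max M1 M2) => j; rewrite leq_eqVlt => /orP[/eqP -> | jm] x;
    rewrite ge_max => /andP[h1 h2].
    exact: H2.
  exact: H1.
have [M0 HM] := U n (leqnn n).
exists M0 => hs x hn hu Sx.
rewrite -lee_fin; apply: le_trans (iderive_Dnorm _ _ _ hu) _.
exact: HM.
Qed.

Lemma WR_P r K (s : V -> V) n S j : WRcoef r K s -> (n <= r + 4)%N ->
  P S 1 `|K| n (fun x => s x 0 j).
Proof.
move=> [cs [bs _]] nr; have cs' := Ck_mono nr cs; split; first exact: Ck_coord.
apply: Bnd_coord => // hs x hn hu Sx.
have := le_trans (iderive_Dnorm (@enorm R k) s x hu) (bs (size hs) x (leq_trans hn nr)).
rewrite lee_fin => /le_trans; apply.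
by apply: ler_wpM2r; [exact: ltW (wgt_gt0 _ _) | exact: ler_norm].
Qed.

End L.

Theorem lemma18 (R : realType) (k d : nat) (alpha : R) (r : nat)
  (b : 'rV[R]_k -> 'rV[R]_k) (sig : 'I_d -> 'rV[R]_k -> 'rV[R]_k)
  (HWR : exists K : R, WRcoef r K b /\ forall l : 'I_d, WRcoef r K (sig l)) :
  exists C : R, 0 < C /\
    (forall f : 'rV[R]_k -> R, Cspace alpha (r + 4) f ->
       (wnorm alpha (r + 2) (Lgen b sig f)
        + wnorm alpha r (Lgen b sig (Lgen b sig f))
        <= C%:E * wnorm alpha (r + 4) f)%E) /\
    (forall f : 'rV[R]_k -> R, Cspace alpha (r + 2) f ->
       Cspace alpha r (Lgen b sig f) /\
       (wnorm alpha r (Lgen b sig f) <= C%:E * wnorm alpha (r + 2) f)%E).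
Proof.
case: HWR => K [Wb Ws].
have LB : forall n S beta M (f : 'rV[R]_k -> R), (n <= r + 2)%N -> Ck n.+2 f ->
    Bnd S beta M n.+2 f -> P S beta (Lc k d n `|K| * M) n (Lgen b sig f).
  move=> n S beta M f nr cf bf; apply: Lbound => //.
  - by move=> j; apply: WR_P Wb _; apply: leq_trans nr _; rewrite leq_add2l.
  - by move=> l j; apply: WR_P (Ws l) _; apply: leq_trans nr _; rewrite leq_add2l.
have e4 : (r + 4 = (r + 2).+2)%N by rewrite !addnS.
have e2 : (r + 2 = r.+2)%N by rewrite !addnS addn0.
set c1 := Lc k d (r + 2) `|K|.
set c0 := Lc k d r `|K|.
have c1p : 0 <= c1 by apply: Lc_ge0.
have c0p : 0 <= c0 by apply: Lc_ge0.
have c01 : 0 <= c0 * c1 by apply: mulr_ge0.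
exists (c1 + c0 * c1 + c0 + 1); split; first by lra.
split.
  move=> f [cf [fin dec]].
  have [W0 [EW BW]] := wnorm_Bnd fin.
  set W := fine (wnorm alpha (r + 4) f) in W0 EW BW.
  rewrite e4 in cf BW.
  have [cL bL] := LB (r + 2)%N setT alpha W f (leqnn _) cf BW.
  rewrite -/c1 in bL.
  rewrite e2 in cL bL.
  have [_ bLL] := LB r setT alpha (c1 * W) _ (leq_addr _ _) cL bL.
  rewrite -/c0 in bLL.
  rewrite -e2 in bL.
  apply: le_trans (leeD (wnorm_le bL) (wnorm_le bLL)) _.
  rewrite -EW -EFinD -EFinM lee_fin.
  nra.
move=> f [cf [fin dec]].
have [W0 [EW BW]] := wnorm_Bnd fin.
set W := fine (wnorm alpha (r + 2) f) in W0 EW BW.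
rewrite e2 in cf BW.
have [cL bL] := LB r setT alpha W f (leq_addr _ _) cf BW.
rewrite -/c0 in bL.
split; last first.
  apply: le_trans (wnorm_le bL) _.
  rewrite -EW -EFinM lee_fin; nra.
split; first exact: cL.
split; first exact: le_lt_trans (wnorm_le bL) (ltry _).
move=> j jr eps he.
have he' : 0 < eps / (c0 + 1) by apply: divr_gt0 => //; lra.
rewrite e2 in dec.
have [M0 BM] := decay_Bnd dec he'.
have [_ bM] := LB r _ alpha _ f (leq_addr _ _) cf BM.
exists M0 => x hx.
apply: le_trans (Bnd_Dnorm bM jr hx) _.
rewrite lee_fin; apply: ler_wpM2r; first exact: ltW (wgt_gt0 _ _).
rewrite -/c0 mulrA ler_pdivrMr; last by lra.
nra.
Qed.
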